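(* Let $S$ be an upper semilattice. Then there exists no upper semilattice homomorphism from any subsemilattice $S_0\subseteq S$ onto $\mathrm{Id}(S)$.
   Context: For an upper semilattice (join-semilattice) $S$, an ideal of $S$ is a (possibly empty) upward directed downset of $S$ (downset: $x\le y\in d\Rightarrow x\in d$), equivalently a possibly empty subset closed under finite joins and downward closed. $\mathrm{Id}(S)$ denotes the set of all ideals of $S$, including $\emptyset$, ordered by inclusion; it is a complete lattice, regarded here as an upper semilattice under its join (the join of two ideals is the ideal generated by their union). A subsemilattice of $S$ is a subset closed under binary joins. *)

(* Defs.v *)
From HB Require Import structures.
From mathcomp Require Import all_boot all_order.
Set Implicit Arguments. Unset Strict Implicit. Unset Printing Implicit Defensive.
Import Order.TTheory.
Local Open Scope order_scope.

Definition subsemilattice d (S : joinSemilatticeType d) (S0 : S -> Prop) : Prop :=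
  forall x y, S0 x -> S0 y -> S0 (x `|` y).

(* An ideal: a (possibly empty) upward directed downset. *)
Definition is_ideal d (S : joinSemilatticeType d) (I : S -> Prop) : Prop :=
  (forall x y : S, x <= y -> I y -> I x) /\
  (forall x y : S, I x -> I y -> exists z, I z /\ x <= z /\ y <= z).

Definition ideal_join d (S : joinSemilatticeType d) (I J : S -> Prop) : S -> Prop :=
  fun z => forall K : S -> Prop, is_ideal K ->
    (forall x, I x -> K x) -> (forall x, J x -> K x) -> K z.

Definition set_eq (T : Type) (A B : T -> Prop) : Prop := forall x, A x <-> B x.

(* Main.v *)
Require Import Defs.
From HB Require Import structures.
From mathcomp Require Import all_boot all_order.
From mathcomp Require Import classical_sets.
Import Order.TTheory.
Local Open Scope order_scope.

Theorem theorem3p1 (d : Order.disp_t) (S : joinSemilatticeType d) :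
  ~ exists (S0 : S -> Prop) (f : S -> (S -> Prop)),
      subsemilattice S0 /\
      (forall x, S0 x -> is_ideal (f x)) /\
      (forall x y, S0 x -> S0 y -> set_eq (f (x `|` y)) (ideal_join (f x) (f y))) /\
      (forall I : S -> Prop, is_ideal I -> exists x, S0 x /\ set_eq (f x) I).
Proof.
move=> [S0 [f [HS0 [Hid [Hhom Hsurj]]]]].
have mono : forall x y, S0 x -> S0 y -> x <= y -> forall z, f x z -> f y z.
  move=> x y Sx Sy xy z fxz.
  have -> : y = x `|` y by apply/esym/eqP; rewrite eq_joinr.
  by apply/(Hhom _ _ Sx Sy) => K _ HI _; apply: HI.
pose N := fun x => S0 x /\ ~ f x x.
pose Pr := fun D : S -> Prop =>
  [/\ (forall x, D x -> N x),
      (forall x y, D x -> D y -> exists z, D z /\ x <= z /\ y <= z) &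
      (forall x y, D x -> f x y -> exists z, D z /\ y <= z)].
have [D [[DN Ddir Dcl] Dmax]] : exists D, Pr D /\ forall B, proper D B -> ~ Pr B.
  apply: Zorn_bigcup => F FP Ftot; split.
  - by move=> x [X FX Xx]; case: (FP _ FX) => + _ _; apply.
  - move=> x y [X FX Xx] [Y FY Yy].
    case: (Ftot _ _ FX FY) => [XY|YX].
    + case: (FP _ FY) => _ + _ => /(_ x y (XY _ Xx) Yy) [z [Yz [xz yz]]].
      by exists z; split=> //; exists Y.
    + case: (FP _ FX) => _ + _ => /(_ x y Xx (YX _ Yy)) [z [Xz [xz yz]]].
      by exists z; split=> //; exists X.
  - move=> x y [X FX Xx] fxy.
    case: (FP _ FX) => _ _ /(_ x y Xx fxy) [z [Xz yz]].
    by exists z; split=> //; exists X.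
pose J := fun y => exists z, D z /\ y <= z.
have Jid : is_ideal J.
  split.
  - by move=> x y xy [z [Dz yz]]; exists z; split=> //; apply: le_trans yz.
  - move=> x y [z1 [D1 x1]] [z2 [D2 y2]].
    case: (Ddir _ _ D1 D2) => z [Dz [h1z h2z]].
    exists z; split; first by exists z.
    by split; [apply: le_trans h1z|apply: le_trans h2z].
have [a [Sa Ha]] := Hsurj J Jid.
have [Ja|nJa] := boolp.pselect (J a).
  case: Ja => z [Dz az].
  have [Sz nfz] := DN _ Dz.
  apply: nfz; apply: (mono a z Sa Sz az); apply/Ha; by exists z.
have Na : N a by split=> //; move/Ha.
have fDJ : forall x y, D x -> f x y -> J y by move=> x y Dx fxy; apply: Dcl fxy.
have jJ : forall x, D x -> forall y, f (a `|` x) y -> J y.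
  move=> x Dx y; move/(Hhom _ _ Sa (proj1 (DN _ Dx))); apply=> //.
  - by move=> u /Ha.
  - by move=> u; apply: fDJ.
pose D' := fun x => D x \/ x = a \/ exists z, D z /\ x = a `|` z.
apply: (Dmax D').
  split; first by move=> x Dx; left.
  move=> sub; apply: nJa; exists a; split; last by [].
  by apply: sub; right; left.
have bound : forall x, D' x -> x = a \/ exists z, D z /\ x <= a `|` z.
  move=> x [Dx|[->|[z [Dz ->]]]].
  - by right; exists x; split=> //; apply: leUr.
  - by left.
  - by right; exists z.
split.
- move=> x [Dx|[->|[z [Dz ->]]]]; [exact: DN| exact: Na|].
  split; first by apply: HS0 => //; case: (DN _ Dz).
  move=> /(jJ _ Dz) [w [Dw aw]]; apply: nJa; exists w; split=> //.
  by apply: le_trans aw; apply: leUl.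
- move=> x y Dx Dy.
  case: (bound _ Dx) => [->|[z1 [D1 x1]]]; case: (bound _ Dy) => [->|[z2 [D2 y2]]].
  + by exists a; split; [right; left|].
  + exists (a `|` z2); split; first by right; right; exists z2.
    by split=> //; apply: leUl.
  + exists (a `|` z1); split; first by right; right; exists z1.
    by split=> //; apply: leUl.
  + case: (Ddir _ _ D1 D2) => z [Dz [h1z h2z]].
    exists (a `|` z); split; first by right; right; exists z.
    split.
    * by apply: le_trans x1 _; apply: leU2.
    * by apply: le_trans y2 _; apply: leU2.
- move=> x y D'x fxy.
  have Jy : J y.
    case: D'x => [Dx|[Ex|[z [Dz Ex]]]].
    + exact: fDJ fxy.
    + by subst x; apply/Ha.
    + by subst x; apply: jJ fxy.
  by case: Jy => z [Dz yz]; exists z; split=> //; left.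
Qed.
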